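(* Let $G$ be a connected graph on $n\ge2$ vertices, $\alpha\in\mathbb{R}$, with vertices labeled so that $({}^\alpha\mathbb{M})_1\ge\cdots\ge({}^\alpha\mathbb{M})_n$. Let $T=\min_{1\le i\ne j\le n}d_{ij}\mathbb{D}_j^\alpha/\mathbb{D}_i^\alpha$. Then \[\rho(\mathbb{D}(G))\ge \frac{({}^\alpha\mathbb{M})_n-T+\sqrt{(({}^\alpha\mathbb{M})_n+T)^2+4T\sum_{k=1}^{n-1}\big(({}^\alpha\mathbb{M})_k-({}^\alpha\mathbb{M})_n\big)}}{2}.\] Equality holds if and only if $({}^\alpha\mathbb{M})_1=\cdots=({}^\alpha\mathbb{M})_n$, or for some $2\le t\le n$: (i) $d_{kl}\mathbb{D}_l^\alpha/\mathbb{D}_k^\alpha=T$ for all $1\le k\le n$, $1\le l\le t-1$, $k\ne l$; (ii) $({}^\alpha\mathbb{M})_t=\cdots=({}^\alpha\mathbb{M})_n$.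
   Context: $\mathbb{D}(G)=(d_{ij})$ is the distance matrix of $G$, $\mathbb{D}_i=\sum_j d_{ij}$ the transmission of $v_i$, and $({}^\alpha\mathbb{M})_i=\frac{\sum_{j=1}^n d_{ij}\mathbb{D}_j^\alpha}{\mathbb{D}_i^\alpha}$ the generalized average transmission. $\rho$ is the spectral radius. *)

(* Defs.v *)
From Stdlib Require Import Reals Lra Lia List Arith.
Import ListNotations.
Open Scope R_scope.

Definition simple_graph (n : nat) (adj : nat -> nat -> bool) : Prop :=
  (forall i j, (i < n)%nat -> (j < n)%nat -> adj i j = adj j i) /\
  (forall i, (i < n)%nat -> adj i i = false).

Fixpoint walkb (n : nat) (adj : nat -> nat -> bool) (k i j : nat) : bool :=
  match k with
  | O => Nat.eqb i j
  | S k' => existsb (fun m => andb (adj i m) (walkb n adj k' m j)) (seq 0 n)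
  end.

Definition connected (n : nat) (adj : nat -> nat -> bool) : Prop :=
  forall i j, (i < n)%nat -> (j < n)%nat -> exists k, walkb n adj k i j = true.

(* least k in [0, bound) with a walk of length k from i to j (bound if none) *)
Fixpoint first_walk (n : nat) (adj : nat -> nat -> bool) (i j k fuel : nat) : nat :=
  match fuel with
  | O => k
  | S f => if walkb n adj k i j then k else first_walk n adj i j (S k) f
  end.

(* graph distance d_ij (shortest walk length; in a connected graph on n vertices
   it is < n) *)
Definition dist (n : nat) (adj : nat -> nat -> bool) (i j : nat) : nat :=
  first_walk n adj i j 0 n.

Definition sumR (n : nat) (f : nat -> R) : R :=
  fold_right Rplus 0 (map f (seq 0 n)).

Definition Dmat (n : nat) (adj : nat -> nat -> bool) (i j : nat) : R :=
  INR (dist n adj i j).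

Definition transmission (n : nat) (adj : nat -> nat -> bool) (i : nat) : R :=
  sumR n (fun j => Dmat n adj i j).

Definition gen_avg_trans (n : nat) (adj : nat -> nat -> bool) (a : R) (i : nat) : R :=
  sumR n (fun j => Dmat n adj i j * Rpower (transmission n adj j) a)
  / Rpower (transmission n adj i) a.

Definition qratio (n : nat) (adj : nat -> nat -> bool) (a : R) (i j : nat) : R :=
  Dmat n adj i j * Rpower (transmission n adj j) a / Rpower (transmission n adj i) a.

Definition list_min (l : list R) : R := fold_right Rmin (hd 0 l) l.

Definition Tmin (n : nat) (adj : nat -> nat -> bool) (a : R) : R :=
  list_min (flat_map (fun i => map (fun j => qratio n adj a i j)
                         (filter (fun j => negb (Nat.eqb i j)) (seq 0 n)))
                     (seq 0 n)).

Definition is_eigenvalue (n : nat) (A : nat -> nat -> R) (lam : R) : Prop :=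
  exists v : nat -> R, (exists i, (i < n)%nat /\ v i <> 0) /\
    forall i, (i < n)%nat -> sumR n (fun j => A i j * v j) = lam * v i.

(* rho is the spectral radius of A: the supremum of |lam| over eigenvalues
   (A is real symmetric here, so all eigenvalues are real) *)
Definition is_spectral_radius (n : nat) (A : nat -> nat -> R) (rho : R) : Prop :=
  is_lub (fun r => exists lam, is_eigenvalue n A lam /\ r = Rabs lam) rho.

(* Main.v *)
Require Import Defs.
From Stdlib Require Import Reals List Arith Lra Lia Classical Bool.
From HB Require Import structures.
From mathcomp Require all_boot all_order all_algebra all_classical all_reals all_analysis Rstruct Rstruct_topology.
Import ListNotations.
Open Scope R_scope.

Lemma fold_plus_c l c : fold_right Rplus c l = fold_right Rplus 0 l + c.
Proof. induction l as [|x l IH]; simpl; [lra| rewrite IH; lra]. Qed.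

Lemma sumR_0 f : sumR 0 f = 0.
Proof. reflexivity. Qed.

Lemma sumR_S n f : sumR (S n) f = sumR n f + f n.
Proof.
  unfold sumR. rewrite seq_S, map_app, fold_right_app. simpl.
  rewrite fold_plus_c. lra.
Qed.

Lemma sumR_ext n f g : (forall i, (i < n)%nat -> f i = g i) -> sumR n f = sumR n g.
Proof.
  induction n; intros H; [reflexivity|].
  rewrite !sumR_S, IHn by (intros; apply H; lia). rewrite H by lia. reflexivity.
Qed.

Lemma sumR_plus n f g : sumR n (fun i => f i + g i) = sumR n f + sumR n g.
Proof. induction n; [unfold sumR; simpl; lra|]. rewrite !sumR_S, IHn. lra. Qed.

Lemma sumR_minus n f g : sumR n (fun i => f i - g i) = sumR n f - sumR n g.
Proof. induction n; [unfold sumR; simpl; lra|]. rewrite !sumR_S, IHn. lra. Qed.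

Lemma sumR_scal n c f : sumR n (fun i => c * f i) = c * sumR n f.
Proof. induction n; [unfold sumR; simpl; lra|]. rewrite !sumR_S, IHn. lra. Qed.

Lemma sumR_zero n : sumR n (fun _ => 0) = 0.
Proof. induction n; [reflexivity|]. rewrite sumR_S, IHn. lra. Qed.

Lemma sumR_le n f g : (forall i, (i < n)%nat -> f i <= g i) -> sumR n f <= sumR n g.
Proof.
  induction n; intros H; [unfold sumR; simpl; lra|].
  rewrite !sumR_S. assert (f n <= g n) by (apply H; lia).
  assert (sumR n f <= sumR n g) by (apply IHn; intros; apply H; lia). lra.
Qed.

Lemma sumR_nonneg n f : (forall i, (i < n)%nat -> 0 <= f i) -> 0 <= sumR n f.
Proof. intros H. rewrite <- (sumR_zero n). apply sumR_le. exact H. Qed.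

Lemma sumR_ge_term n f i : (forall i, (i < n)%nat -> 0 <= f i) -> (i < n)%nat -> f i <= sumR n f.
Proof.
  induction n; intros H Hi; [lia|].
  rewrite sumR_S. destruct (Nat.eq_dec i n) as [->|Hne].
  - assert (0 <= sumR n f) by (apply sumR_nonneg; intros; apply H; lia). lra.
  - assert (f i <= sumR n f) by (apply IHn; [intros; apply H; lia | lia]).
    assert (0 <= f n) by (apply H; lia). lra.
Qed.

Lemma sumR_zero_each n f : (forall i, (i < n)%nat -> 0 <= f i) -> sumR n f = 0 ->
  forall i, (i < n)%nat -> f i = 0.
Proof.
  intros H H0 i Hi. assert (f i <= sumR n f) by (apply sumR_ge_term; auto).
  assert (0 <= f i) by auto. lra.
Qed.

Lemma sumR_delta n i c : (i < n)%nat ->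
  sumR n (fun j => if Nat.eqb i j then c j else 0) = c i.
Proof.
  induction n; intros Hi; [lia|]. rewrite sumR_S.
  destruct (Nat.eq_dec i n) as [->|Hne].
  - rewrite Nat.eqb_refl. rewrite (sumR_ext n _ (fun _ => 0)).
    + rewrite sumR_zero. lra.
    + intros j Hj. destruct (Nat.eqb_spec n j); [lia|reflexivity].
  - rewrite IHn by lia. destruct (Nat.eqb_spec i n); [lia|lra].
Qed.

Lemma sumR_swap n m (f : nat -> nat -> R) :
  sumR n (fun i => sumR m (fun j => f i j)) = sumR m (fun j => sumR n (fun i => f i j)).
Proof.
  induction n; simpl.
  - rewrite sumR_zero. reflexivity.
  - rewrite sumR_S, IHn, <- sumR_plus. apply sumR_ext. intros. rewrite sumR_S. reflexivity.
Qed.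

Lemma sumR_abs n f : Rabs (sumR n f) <= sumR n (fun i => Rabs (f i)).
Proof.
  induction n; [unfold sumR; simpl; rewrite Rabs_R0; lra|].
  rewrite !sumR_S. eapply Rle_trans; [apply Rabs_triang|]. lra.
Qed.

Lemma argmax n (f : nat -> R) : (0 < n)%nat -> exists i0, (i0 < n)%nat /\ forall i, (i < n)%nat -> f i <= f i0.
Proof.
  induction n; intros Hn; [lia|].
  destruct (Nat.eq_dec n 0) as [->|Hne].
  - exists 0%nat. split; [lia|]. intros i Hi. replace i with 0%nat by lia. lra.
  - destruct IHn as [i1 [Hi1 Hm]]; [lia|].
    destruct (Rle_dec (f n) (f i1)).
    + exists i1. split; [lia|]. intros i Hi. destruct (Nat.eq_dec i n) as [->|]; [lra|]. apply Hm; lia.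
    + exists n. split; [lia|]. intros i Hi. destruct (Nat.eq_dec i n) as [->|]; [lra|].
      assert (f i <= f i1) by (apply Hm; lia). lra.
Qed.

Definition Nq n (v : nat -> R) := sumR n (fun i => v i * v i).
Definition Qf n (A : nat -> nat -> R) (v : nat -> R) :=
  sumR n (fun i => v i * sumR n (fun j => A i j * v j)).
Definition inbox (u : nat -> R) := forall i, -1 <= u i <= 1.
Definition unitv n (u : nat -> R) := Nq n u = 1 /\ inbox u.

Module MC.
Import HB.structures.
Import all_boot all_order all_algebra all_classical all_reals all_analysis Rstruct Rstruct_topology.
Import Order.TTheory GRing.Theory Num.Theory.
Import numFieldNormedType.Exports.
Local Open Scope classical_set_scope.
Local Open Scope ring_scope.

Definition vf n (v : 'rV[R]_n) : nat -> R :=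
  fun i => match (insub i : option 'I_n) with Some k => v ord0 k | None => 0%R end.

Lemma vf_cont n i : continuous (fun v : 'rV[R]_n => vf n v i).
Proof.
rewrite /vf; case: (insub i) => [k|]; [exact: coord_continuous | exact: cst_continuous].
Qed.

Lemma fold_cont (T : topologicalType) (l : list nat) (F : nat -> T -> R) :
  (forall i, continuous (F i)) ->
  continuous (fun x => fold_right Rplus 0%R (map (fun i => F i x) l)).
Proof.
move=> HF; elim: l => [|a l IH] /=; first exact: cst_continuous.
move=> x. have := @continuousD R R^o T (F a) _ x (HF a x) (IH x). exact.
Qed.

Lemma sumR_cont (T : topologicalType) n (F : nat -> T -> R) :
  (forall i, continuous (F i)) -> continuous (fun x => sumR n (fun i => F i x)).
Proof. move=> HF; rewrite /sumR; exact: fold_cont. Qed.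

Lemma mul_cont (T : topologicalType) (f g : T -> R) :
  continuous f -> continuous g -> continuous (fun x => Rmult (f x) (g x)).
Proof. move=> cf cg x; have := @continuousM R T f g x (cf x) (cg x). exact. Qed.


Lemma mc_max n (A : nat -> nat -> R) (u0 : nat -> R) : unitv n u0 ->
  exists w, unitv n w /\ forall u, unitv n u -> Rle (Qf n A u) (Qf n A w).
Proof.
move=> Hu0.
pose rv (u : nat -> R) : 'rV[R]_n := \row_(k < n) u k.
have vf_rv u i : (i < n)%N -> vf n (rv u) i = u i.
  move=> Hi; rewrite /vf; case: insubP => [k _ Hk | /negP //]; by rewrite mxE Hk.
have vf_out v i : ~~ (i < n)%N -> vf n v i = 0%R.
  move=> Hi; rewrite /vf; case: insubP => [k Hk _ | //]; by rewrite Hk in Hi.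
have vf_ord v (i : 'I_n) : vf n v i = v ord0 i.
  rewrite /vf; case: insubP => [k _ Hk | ]; [by congr (v ord0 _); apply: val_inj | by rewrite ltn_ord].
have Nrv u : Nq n (vf n (rv u)) = Nq n u.
  by apply: sumR_ext => i /ssrnat.ltP Hi; rewrite vf_rv.
have Qrv u : Qf n A (vf n (rv u)) = Qf n A u.
  apply: sumR_ext => i /ssrnat.ltP Hi; rewrite vf_rv //; congr Rmult.
  by apply: sumR_ext => j /ssrnat.ltP Hj; rewrite vf_rv.
pose K := [set v : 'rV[R]_n | forall i, `[(-1)%R, 1%R]%classic (v ord0 i)] `&`
          [set v | Nq n (vf n v) = 1%R].
have cK : compact K.
  apply: compact_closedI.
    apply: (@rV_compact R n (fun=> `[(-1)%R, 1%R]%classic)) => _.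
    exact: segment_compact.
  apply: (@preimage_closed _ _ (fun v : 'rV[R]_n => Nq n (vf n v)) [set x | x = 1%R]).
    move=> v _; apply: sumR_cont => i; apply: mul_cont; exact: vf_cont.
  exact: closed_eq.
have inK u : unitv n u -> K (rv u).
  move=> [HN Hb]; split; last by rewrite /= Nrv.
  move=> i /=; rewrite mxE; case: (Hb i) => h1 h2. rewrite in_itv /=.
  by apply/andP; split; apply/RleP.
have K0 : K !=set0 by exists (rv u0); exact: inK.
have cf : {within K, continuous (fun v : 'rV[R]_n => Qf n A (vf n v))}.
  apply: continuous_subspaceT; apply: sumR_cont => i; apply: mul_cont;
    first exact: vf_cont.
  apply: sumR_cont => j; apply: mul_cont; first exact: cst_continuous.
  exact: vf_cont.
have [c cK' cmax] := compact_EVT_max K0 cK cf.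
move: (cK') => /set_mem [cB cN].
exists (vf n c); split.
  split; first exact: cN.
  move=> i; case: (ltnP i n) => Hi.
    have /= := cB (Ordinal Hi); rewrite in_itv /= => /andP [h1 h2].
    have -> : vf n c i = c ord0 (Ordinal Hi) by rewrite -vf_ord.
    by split; apply/RleP.
  rewrite vf_out; last by rewrite -leqNgt.
  split; apply/RleP; rewrite ?lerN10 ?ler01 //.
move=> u Hu; rewrite -Qrv; apply/RleP; apply: cmax.
exact/mem_set/inK.
Qed.

End MC.


Lemma rayleigh_exists n A : (0 < n)%nat ->
  exists w, Nq n w = 1 /\ forall v, Qf n A v <= Qf n A w * Nq n v.
Proof.
  intros Hn.
  set (u0 := fun i => if Nat.eqb 0 i then 1 else 0).
  assert (Hu0 : unitv n u0).
  { split.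
    - unfold Nq. rewrite (sumR_ext n _ (fun j => if Nat.eqb 0 j then (fun _ => 1) j else 0)).
      + apply sumR_delta; lia.
      + intros j Hj. unfold u0. destruct (Nat.eqb 0 j); lra.
    - intros i. unfold u0. destruct (Nat.eqb 0 i); lra. }
  destruct (MC.mc_max n A u0 Hu0) as [w [[Hw1 Hw2] Hmax]].
  exists w. split; [exact Hw1|]. intros v.
  assert (HN0 : 0 <= Nq n v) by (apply sumR_nonneg; intros; nra).
  destruct (Req_dec (Nq n v) 0) as [HN|HN].
  - assert (Hv : forall i, (i < n)%nat -> v i = 0).
    { intros i Hi. assert (v i * v i = 0).
      { apply (sumR_zero_each n (fun i => v i * v i)); auto. intros; nra. }
      nra. }
    unfold Qf at 1. rewrite (sumR_ext n _ (fun _ => 0)).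
    + rewrite sumR_zero, HN. lra.
    + intros i Hi. rewrite Hv by exact Hi. lra.
  - set (s := sqrt (Nq n v)).
    assert (Hs : 0 < s) by (apply sqrt_lt_R0; lra).
    assert (Hss : s * s = Nq n v) by (apply sqrt_sqrt; lra).
    set (u := fun i => if Nat.ltb i n then v i / s else 0).
    assert (Hu : forall i, (i < n)%nat -> u i = v i / s).
    { intros i Hi. unfold u. destruct (Nat.ltb_spec i n); [reflexivity|lia]. }
    assert (HNu : Nq n u = 1).
    { unfold Nq. rewrite (sumR_ext n _ (fun i => / (s * s) * (v i * v i))).
      - rewrite sumR_scal. fold (Nq n v). rewrite <- Hss. field. lra.
      - intros i Hi. rewrite Hu by exact Hi. field. lra. }
    assert (Hbox : inbox u).
    { intros i. destruct (Nat.ltb_spec i n) as [Hi|Hi].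
      - assert (u i * u i <= 1).
        { rewrite <- HNu. apply (sumR_ge_term n (fun i => u i * u i)); auto. intros; nra. }
        split; nra.
      - unfold u. destruct (Nat.ltb_spec i n); [lia|lra]. }
    assert (HQu : Qf n A u = Qf n A v / (s * s)).
    { unfold Qf. rewrite (sumR_ext n _ (fun i => / (s * s) * (v i * sumR n (fun j => A i j * v j)))).
      - rewrite sumR_scal. field. lra.
      - intros i Hi. rewrite Hu by exact Hi.
        rewrite (sumR_ext n (fun j => A i j * u j) (fun j => / s * (A i j * v j))).
        + rewrite sumR_scal. field. lra.
        + intros j Hj. rewrite Hu by exact Hj. field. lra. }
    assert (H := Hmax u (conj HNu Hbox)). rewrite HQu in H.
    rewrite <- Hss.
    assert (Qf n A v <= Qf n A w * (s * s)).
    { apply (Rmult_le_compat_r (s * s)) in H; [|nra].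
      unfold Rdiv in H. rewrite Rmult_assoc, Rinv_l in H by nra. lra. }
    lra.
Qed.

Lemma lagrange n (A : nat -> nat -> R) mu w :
  (forall i j, (i < n)%nat -> (j < n)%nat -> A i j = A j i) ->
  (forall v, Qf n A v <= mu * Nq n v) -> Qf n A w = mu * Nq n w ->
  forall i, (i < n)%nat -> sumR n (fun j => A i j * w j) = mu * w i.
Proof.
  intros Hs Hle Heq i Hi.
  set (e := fun k => if Nat.eqb i k then 1 else 0).
  set (X := fun k => sumR n (fun j => A k j * w j)).
  assert (HQ : forall t, Qf n A (fun k => w k + t * e k) =
      Qf n A w + 2 * t * X i + t * t * A i i).
  { intros t. unfold Qf.
    rewrite (sumR_ext n _ (fun k => w k * X k + t * (w k * A i k) + t * (if Nat.eqb i k then X k else 0)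
                                     + t * t * (if Nat.eqb i k then A k i else 0))).
    - rewrite !sumR_plus, !sumR_scal, !sumR_delta by exact Hi.
      fold (X i). unfold X at 1. unfold Qf.
      assert (sumR n (fun k => w k * A i k) = X i).
      { unfold X. apply sumR_ext. intros. lra. }
      rewrite H. lra.
    - intros k Hk.
      rewrite (sumR_ext n _ (fun j => A k j * w j + t * (if Nat.eqb i j then A k j else 0))).
      + rewrite sumR_plus, sumR_scal, sumR_delta by exact Hi. fold (X k).
        rewrite (Hs k i Hk Hi). unfold e. destruct (Nat.eqb i k); lra.
      + intros j Hj. unfold e. destruct (Nat.eqb i j); lra. }
  assert (HN : forall t, Nq n (fun k => w k + t * e k) = Nq n w + 2 * t * w i + t * t).
  { intros t. unfold Nq.
    rewrite (sumR_ext n _ (fun k => w k * w k + 2 * t * (if Nat.eqb i k then w k else 0)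
                                     + t * t * (if Nat.eqb i k then 1 else 0))).
    - rewrite !sumR_plus, !sumR_scal, !sumR_delta by exact Hi. lra.
    - intros k Hk. unfold e. destruct (Nat.eqb i k); lra. }
  set (g := X i - mu * w i). set (c := mu - A i i).
  assert (Hall : forall t, 2 * t * g <= t * t * c).
  { intros t. specialize (Hle (fun k => w k + t * e k)). rewrite HQ, HN in Hle.
    unfold g, c. nra. }
  set (k := Rabs c + 1).
  assert (Hk : 0 < k) by (unfold k; pose proof (Rabs_pos c); lra).
  assert (Hck : c < k) by (unfold k; pose proof (Rle_abs c); lra).
  specialize (Hall (g / k)).
  assert (g * g * k <= 0).
  { assert (H2 : 2 * g * g * k <= g * g * c).
    { apply (Rmult_le_compat_r (k * k)) in Hall; [|nra].
      replace (2 * (g / k) * g * (k * k)) with (2 * g * g * k) in Hall by (field; lra).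
      replace (g / k * (g / k) * c * (k * k)) with (g * g * c) in Hall by (field; lra).
      exact Hall. }
    assert (g * g * c <= g * g * k) by (apply Rmult_le_compat_l; nra).
    lra. }
  assert (Hgg : g * g <= 0).
  { destruct (Rle_dec (g * g) 0) as [|Hn]; [assumption|].
    assert (0 < g * g * k) by (apply Rmult_lt_0_compat; lra). lra. }
  assert (g = 0) by nra. unfold g, X in *. lra.
Qed.

Lemma ub_lemma n (A : nat -> nat -> R) y beta lam v : (0 < n)%nat ->
  (forall i j, (i < n)%nat -> (j < n)%nat -> 0 <= A i j) ->
  (forall i, (i < n)%nat -> 0 < y i) ->
  (forall i, (i < n)%nat -> sumR n (fun j => A i j * y j) = beta * y i) ->
  (exists i, (i < n)%nat /\ v i <> 0) ->
  (forall i, (i < n)%nat -> sumR n (fun j => A i j * v j) = lam * v i) ->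
  Rabs lam <= beta.
Proof.
  intros Hn HA Hy Hb [i1 [Hi1 Hv1]] Hev.
  destruct (argmax n (fun i => Rabs (v i) / y i) Hn) as [i0 [Hi0 Hm]].
  set (c := Rabs (v i0) / y i0).
  assert (Hy0 := Hy i0 Hi0).
  assert (Hc : 0 < c).
  { assert (0 < Rabs (v i1) / y i1).
    { unfold Rdiv. apply Rmult_lt_0_compat; [apply Rabs_pos_lt; auto| apply Rinv_0_lt_compat; auto]. }
    specialize (Hm i1 Hi1). unfold c. lra. }
  assert (Hvj : forall j, (j < n)%nat -> Rabs (v j) <= c * y j).
  { intros j Hj. specialize (Hm j Hj). assert (Hyj := Hy j Hj).
    fold c in Hm. apply (Rmult_le_compat_r (y j)) in Hm; [|lra].
    unfold Rdiv in Hm. rewrite Rmult_assoc, Rinv_l in Hm by lra. lra. }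
  assert (Hvi0 : Rabs (v i0) = c * y i0) by (unfold c; field; lra).
  assert (H1 : Rabs lam * Rabs (v i0) <= beta * Rabs (v i0)).
  { rewrite <- Rabs_mult, <- (Hev i0 Hi0).
    eapply Rle_trans; [apply sumR_abs|].
    eapply Rle_trans with (sumR n (fun j => c * (A i0 j * y j))).
    - apply sumR_le. intros j Hj. rewrite Rabs_mult, (Rabs_right (A i0 j)) by (apply Rle_ge, HA; auto).
      specialize (Hvj j Hj). specialize (HA i0 j Hi0 Hj). nra.
    - rewrite sumR_scal, Hb by exact Hi0. rewrite Hvi0. lra. }
  assert (0 < Rabs (v i0)) by nra.
  apply (Rmult_le_reg_r (Rabs (v i0))); auto.
Qed.


Lemma walkb_0 n adj i j : walkb n adj 0 i j = true <-> i = j.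
Proof. simpl. apply Nat.eqb_eq. Qed.

Lemma walkb_S n adj k i j : walkb n adj (S k) i j = true <->
  exists m, (m < n)%nat /\ adj i m = true /\ walkb n adj k m j = true.
Proof.
  simpl. rewrite existsb_exists. split.
  - intros [m [Hm H]]. apply in_seq in Hm. apply andb_true_iff in H. exists m. split; [lia|tauto].
  - intros [m [Hm [H1 H2]]]. exists m. split; [apply in_seq; lia|]. apply andb_true_iff; auto.
Qed.

Lemma walk_concat n adj a b i m j : walkb n adj a i m = true -> walkb n adj b m j = true ->
  walkb n adj (a + b) i j = true.
Proof.
  revert i. induction a; intros i H1 H2.
  - apply walkb_0 in H1. subst. exact H2.
  - apply walkb_S in H1. destruct H1 as [m1 [Hm1 [Ha Hw]]].
    simpl. apply walkb_S. exists m1. repeat split; auto.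
Qed.

Lemma walk_rev n adj k i j : simple_graph n adj -> (i < n)%nat -> (j < n)%nat ->
  walkb n adj k i j = true -> walkb n adj k j i = true.
Proof.
  intros [Hsym _]. revert i. induction k; intros i Hi Hj H.
  - apply walkb_0 in H. subst. apply walkb_0. reflexivity.
  - apply walkb_S in H. destruct H as [m [Hm [Ha Hw]]].
    assert (H1 : walkb n adj k j m = true) by (apply IHk; auto).
    assert (H2 : walkb n adj 1 m i = true).
    { apply walkb_S. exists i. repeat split; auto. rewrite Hsym; auto. apply walkb_0; reflexivity. }
    replace (S k) with (k + 1)%nat by lia. eapply walk_concat; eauto.
Qed.

Lemma walkb_sym n adj k i j : simple_graph n adj -> (i < n)%nat -> (j < n)%nat ->
  walkb n adj k i j = walkb n adj k j i.
Proof.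
  intros Hg Hi Hj. destruct (walkb n adj k i j) eqn:E1; destruct (walkb n adj k j i) eqn:E2; auto.
  - apply walk_rev in E1; auto. congruence.
  - apply walk_rev in E2; auto. congruence.
Qed.

Lemma first_walk_sym n adj i j k fuel : simple_graph n adj -> (i < n)%nat -> (j < n)%nat ->
  first_walk n adj i j k fuel = first_walk n adj j i k fuel.
Proof.
  intros Hg Hi Hj. revert k. induction fuel; intros k; simpl; auto.
  rewrite walkb_sym by auto. rewrite IHfuel. reflexivity.
Qed.

Lemma first_walk_ge n adj i j k fuel : (k <= first_walk n adj i j k fuel)%nat.
Proof.
  revert k. induction fuel; intros k; simpl; auto.
  destruct (walkb n adj k i j); auto. specialize (IHfuel (S k)). lia.
Qed.


Lemma Dmat_sym n adj (Hg : simple_graph n adj) i j : (i < n)%nat -> (j < n)%nat -> Dmat n adj i j = Dmat n adj j i.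
Proof. intros Hi Hj. unfold Dmat, Defs.dist. rewrite (first_walk_sym n adj i j 0 n Hg Hi Hj). reflexivity. Qed.

Lemma Dmat_nonneg n adj i j : 0 <= Dmat n adj i j.
Proof. unfold Dmat. apply pos_INR. Qed.

Lemma Dmat_diag n adj (Hn : (2 <= n)%nat) (Hg : simple_graph n adj) i : Dmat n adj i i = 0.
Proof.
  unfold Dmat, Defs.dist. destruct n as [|f]; [lia|]. simpl. rewrite Nat.eqb_refl. reflexivity.
Qed.

Lemma Dmat_off n adj (Hn : (2 <= n)%nat) (Hg : simple_graph n adj) i j : i <> j -> 1 <= Dmat n adj i j.
Proof.
  intros Hij. unfold Dmat, Defs.dist. destruct n as [|f]; [lia|]. simpl.
  destruct (Nat.eqb_spec i j); [lia|]. apply (le_INR 1). apply first_walk_ge.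
Qed.

Definition xx n adj a i := Rpower (transmission n adj i) a.
Lemma xx_pos n adj a i : 0 < xx n adj a i.
Proof. unfold xx, Rpower. apply exp_pos. Qed.

Lemma qratio_eq n adj a i j : qratio n adj a i j = Dmat n adj i j * xx n adj a j / xx n adj a i.
Proof. reflexivity. Qed.

Lemma qratio_nonneg n adj a i j : 0 <= qratio n adj a i j.
Proof.
  rewrite qratio_eq. pose proof (xx_pos n adj a i). pose proof (xx_pos n adj a j). pose proof (Dmat_nonneg n adj i j).
  unfold Rdiv. apply Rmult_le_pos; [nra| left; apply Rinv_0_lt_compat; lra].
Qed.

Lemma gat_sum n adj a i : gen_avg_trans n adj a i = sumR n (fun j => qratio n adj a i j).
Proof.
  unfold gen_avg_trans. fold (xx n adj a i).
  rewrite (sumR_ext n (fun j => qratio n adj a i j) (fun j => / xx n adj a i * (Dmat n adj i j * xx n adj a j))).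
  - rewrite sumR_scal. unfold Rdiv. rewrite Rmult_comm. f_equal.
  - intros j Hj. rewrite qratio_eq. unfold Rdiv. ring.
Qed.

Lemma fold_min_le l h y : In y l -> fold_right Rmin h l <= y.
Proof.
  induction l; simpl; [tauto|]. intros [->|H].
  - apply Rmin_l.
  - eapply Rle_trans; [apply Rmin_r| auto].
Qed.

Lemma fold_min_ge l h : 0 <= h -> (forall y, In y l -> 0 <= y) -> 0 <= fold_right Rmin h l.
Proof.
  induction l; simpl; intros Hh H; auto. apply Rmin_glb; auto.
Qed.

Lemma Tmin_le n adj a (Hn : (2 <= n)%nat) i j : (i < n)%nat -> (j < n)%nat -> i <> j -> Tmin n adj a <= qratio n adj a i j.
Proof.
  intros Hi Hj Hij. unfold Tmin, list_min. apply fold_min_le.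
  apply in_flat_map. exists i. split; [apply in_seq; lia|].
  apply in_map_iff. exists j. split; auto. apply filter_In. split; [apply in_seq; lia|].
  destruct (Nat.eqb_spec i j); [lia|reflexivity].
Qed.

Lemma Tmin_nonneg n adj a : 0 <= Tmin n adj a.
Proof.
  unfold Tmin, list_min.
  assert (Hall : forall y, In y (flat_map (fun i => map (fun j => qratio n adj a i j)
                         (filter (fun j => negb (Nat.eqb i j)) (seq 0 n))) (seq 0 n)) -> 0 <= y).
  { intros y Hy. apply in_flat_map in Hy. destruct Hy as [i [_ Hy]]. apply in_map_iff in Hy.
    destruct Hy as [j [<- _]]. apply qratio_nonneg. }
  revert Hall. generalize (flat_map (fun i => map (fun j => qratio n adj a i j)
                         (filter (fun j => negb (Nat.eqb i j)) (seq 0 n))) (seq 0 n)).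
  intros l Hall. apply fold_min_ge; auto.
  destruct l; simpl; [lra|]. apply Hall. left; reflexivity.
Qed.



Lemma min_exists (P : nat -> Prop) m : P m ->
  exists p, (p <= m)%nat /\ P p /\ forall j, (j < p)%nat -> ~ P j.
Proof.
  assert (H : forall m q, (q <= m)%nat -> P q -> exists p, (p <= q)%nat /\ P p /\ forall j, (j < p)%nat -> ~ P j).
  { induction m0; intros q Hq HP.
    - exists q. split; [lia|]. split; auto. intros; lia.
    - destruct (Nat.le_gt_cases q m0) as [Hle|Hgt]; [apply IHm0; auto|].
      destruct (classic (exists j, (j <= m0)%nat /\ P j)) as [[j [Hj HPj]]|Hno].
      + destruct (IHm0 j Hj HPj) as [p [Hp [HPp Hmin]]]. exists p. split; [lia|]. auto.
      + exists q. split; [lia|]. split; auto. intros j Hj HPj. apply Hno. exists j. split; [lia|auto]. }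
  intros HPm. apply (H m m); auto.
Qed.

Lemma main_result n adj a rho (Hn : (2 <= n)%nat) (Hg : simple_graph n adj)
  (Hord : forall i j, (i <= j)%nat -> (j < n)%nat ->
            gen_avg_trans n adj a j <= gen_avg_trans n adj a i)
  (Hrho : is_spectral_radius n (Dmat n adj) rho) :
  let M := gen_avg_trans n adj a in
  let T := Tmin n adj a in
  let Mn := M (n - 1)%nat in
  let bound := (Mn - T + sqrt ((Mn + T) ^ 2
                  + 4 * T * sumR (n - 1) (fun k => M k - Mn))) / 2 in
  rho >= bound /\
  (rho = bound <->
     ((forall k, (k < n)%nat -> M k = Mn) \/
      (exists t, (2 <= t)%nat /\ (t <= n)%nat /\
         (forall k l, (k < n)%nat -> (l < t - 1)%nat -> k <> l ->
            qratio n adj a k l = T) /\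
         (forall k, (t - 1 <= k)%nat -> (k < n)%nat -> M k = Mn)))).
Proof.
  intros M T Mn bound.
  set (SS := sumR (n - 1) (fun k => M k - Mn)).
  set (B := qratio n adj a).
  assert (HMq : forall i, M i = sumR n (fun j => B i j)) by (intros; apply gat_sum).
  assert (HBT : forall i j, (i < n)%nat -> (j < n)%nat -> i <> j -> T <= B i j)
    by (intros; apply (Tmin_le n adj a Hn); auto).
  assert (HT0 : 0 <= T) by apply Tmin_nonneg.
  assert (HB0 : forall i j, 0 <= B i j) by (intros; apply qratio_nonneg).
  assert (HBii : forall i, B i i = 0).
  { intros i. unfold B. rewrite qratio_eq, (Dmat_diag n adj Hn Hg). unfold Rdiv. ring. }
  assert (Hr : forall j, (j < n)%nat -> Mn <= M j) by (intros; apply Hord; lia).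
  assert (HMn : 0 < Mn).
  { unfold Mn. rewrite HMq.
    assert (B (n-1)%nat 0%nat <= sumR n (fun j => B (n-1)%nat j))
      by (apply (sumR_ge_term n (fun j => B (n-1)%nat j)); [intros; apply HB0| lia]).
    assert (0 < B (n-1)%nat 0%nat).
    { unfold B. rewrite qratio_eq. pose proof (Dmat_off n adj Hn Hg (n-1) 0 ltac:(lia)).
      pose proof (xx_pos n adj a 0). pose proof (xx_pos n adj a (n-1)).
      unfold Rdiv. apply Rmult_lt_0_compat; [nra| apply Rinv_0_lt_compat; lra]. }
    lra. }
  assert (HS : 0 <= SS) by (apply sumR_nonneg; intros i Hi; pose proof (Hr i ltac:(lia)); lra).
  assert (HSn : sumR n (fun k => M k - Mn) = SS).
  { unfold SS. replace n with (S (n-1)) at 1 by lia. rewrite sumR_S. unfold Mn at 2. lra. }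
  assert (Hbd : bound = (Mn - T + sqrt ((Mn + T) ^ 2 + 4 * T * SS)) / 2) by reflexivity.
  clearbody bound.
  set (s := sqrt ((Mn + T) ^ 2 + 4 * T * SS)) in Hbd.
  assert (Hs2 : s * s = (Mn + T) ^ 2 + 4 * T * SS) by (apply sqrt_sqrt; nra).
  assert (Hs0 : 0 <= s) by apply sqrt_pos.
  assert (Hsge : Mn + T <= s) by nra.
  assert (Hbq : bound * (bound + T) = Mn * bound + T * (Mn + SS)) by (rewrite Hbd; nra).
  assert (HbMn : Mn <= bound) by (rewrite Hbd; lra).
  set (bT := bound + T).
  assert (HbT : 0 < bT) by (unfold bT; lra).
  set (z := fun j => 1 + (M j - Mn) / bT).
  set (y := fun j => xx n adj a j * z j).
  set (W := fun i j => if Nat.eqb i j then 0 else B i j - T).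
  set (E := fun i => sumR n (fun j => W i j * (M j - Mn))).
  assert (HW0 : forall i j, (i < n)%nat -> (j < n)%nat -> 0 <= W i j).
  { intros i j Hi Hj. unfold W. destruct (Nat.eqb_spec i j); [lra|]. pose proof (HBT i j Hi Hj n0). lra. }
  assert (HE0 : forall i, (i < n)%nat -> 0 <= E i).
  { intros i Hi. apply sumR_nonneg. intros j Hj. pose proof (HW0 i j Hi Hj). pose proof (Hr j Hj). nra. }
  assert (Hz : forall j, (j < n)%nat -> 1 <= z j).
  { intros j Hj. unfold z. pose proof (Hr j Hj).
    assert (0 <= (M j - Mn) / bT) by (unfold Rdiv; apply Rmult_le_pos; [lra| left; apply Rinv_0_lt_compat; lra]).
    lra. }
  assert (Hy : forall j, (j < n)%nat -> 0 < y j).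
  { intros j Hj. unfold y. pose proof (xx_pos n adj a j). pose proof (Hz j Hj). nra. }
  assert (KI : forall i, (i < n)%nat -> sumR n (fun j => B i j * z j) = bound * z i + E i / bT).
  { intros i Hi.
    set (P := sumR n (fun j => B i j * (M j - Mn))).
    assert (H1 : sumR n (fun j => B i j * z j) = M i + / bT * P).
    { rewrite (sumR_ext n _ (fun j => B i j + / bT * (B i j * (M j - Mn)))).
      - rewrite sumR_plus, sumR_scal, <- HMq. reflexivity.
      - intros j Hj. unfold z. field. lra. }
    assert (H2 : E i = P - T * SS + T * (M i - Mn)).
    { unfold E. rewrite (sumR_ext n _ (fun j => (B i j * (M j - Mn) - T * (M j - Mn))
                  + (if Nat.eqb i j then (fun j => (T - B i j) * (M j - Mn)) j else 0))).
      - rewrite sumR_plus, sumR_minus, sumR_scal, sumR_delta by exact Hi.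
        rewrite HSn, HBii. fold P. ring.
      - intros j Hj. unfold W. destruct (Nat.eqb_spec i j); [subst; rewrite HBii; ring| ring]. }
    rewrite H1, H2.
    transitivity (M i + / bT * P + (bound * bT - Mn * bound - T * (Mn + SS)) / bT).
    - unfold bT. rewrite Hbq. unfold Rdiv. ring.
    - unfold z, bT; cbv beta. field. unfold bT in HbT. lra. }
  assert (DY : forall i, (i < n)%nat ->
     sumR n (fun j => Dmat n adj i j * y j) = xx n adj a i * (bound * z i + E i / bT)).
  { intros i Hi. rewrite <- KI by exact Hi. rewrite <- sumR_scal. apply sumR_ext.
    intros j Hj. unfold y, B. rewrite qratio_eq. pose proof (xx_pos n adj a i). field. lra. }
  assert (Hsym : forall i j, (i < n)%nat -> (j < n)%nat -> Dmat n adj i j = Dmat n adj j i)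
    by (intros; apply (Dmat_sym n adj Hg); auto).
  assert (NY : 0 < Nq n y).
  { assert (y 0%nat * y 0%nat <= Nq n y)
      by (apply (sumR_ge_term n (fun i => y i * y i)); [intros; pose proof (Hy i H); nra| lia]).
    pose proof (Hy 0%nat ltac:(lia)). nra. }
  assert (QY : bound * Nq n y <= Qf n (Dmat n adj) y).
  { unfold Qf, Nq. rewrite <- sumR_scal. apply sumR_le. intros i Hi. rewrite DY by exact Hi.
    pose proof (HE0 i Hi). pose proof (xx_pos n adj a i). pose proof (Hy i Hi).
    assert (0 <= E i / bT) by (unfold Rdiv; apply Rmult_le_pos; [lra| left; apply Rinv_0_lt_compat; lra]).
    assert (Hq : y i * (xx n adj a i * (bound * z i + E i / bT)) =
              bound * (y i * y i) + y i * (xx n adj a i * (E i / bT))) by (unfold y; ring).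
    rewrite Hq. assert (0 <= y i * (xx n adj a i * (E i / bT))).
    { apply Rmult_le_pos; [lra|]. apply Rmult_le_pos; lra. }
    lra. }
  destruct (rayleigh_exists n (Dmat n adj) ltac:(lia)) as [w [Hw1 Hwmax]].
  set (mu := Qf n (Dmat n adj) w).
  assert (Hmax : forall v, Qf n (Dmat n adj) v <= mu * Nq n v) by exact Hwmax.
  assert (Heigw : forall i, (i < n)%nat -> sumR n (fun j => Dmat n adj i j * w j) = mu * w i).
  { apply lagrange; auto. rewrite Hw1. unfold mu. ring. }
  assert (Hwnz : exists i, (i < n)%nat /\ w i <> 0).
  { apply NNPP. intros Hno. assert (Nq n w = 0).
    { unfold Nq. rewrite (sumR_ext n _ (fun _ => 0)); [apply sumR_zero|].
      intros i Hi. destruct (Req_dec (w i) 0) as [->|Hne]; [ring|]. exfalso. apply Hno. exists i. auto. }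
    lra. }
  assert (Hmurho : mu <= rho).
  { destruct Hrho as [Hub _]. eapply Rle_trans; [apply Rle_abs|]. apply Hub. exists mu. split; auto.
    exists w. split; auto. }
  assert (Hbmu : bound <= mu).
  { assert (Qf n (Dmat n adj) y <= mu * Nq n y) by apply Hmax. nra. }
  assert (Hpart1 : bound <= rho) by lra.
  split; [lra|].
  split.
  - intros Hrb.
    assert (Hmub : mu = bound) by lra.
    assert (Hdy : forall i, (i < n)%nat -> sumR n (fun j => Dmat n adj i j * y j) = mu * y i).
    { apply lagrange; auto. assert (Qf n (Dmat n adj) y <= mu * Nq n y) by apply Hmax. rewrite Hmub in *. lra. }
    assert (HE : forall i, (i < n)%nat -> E i = 0).
    { intros i Hi. pose proof (Hdy i Hi) as H1. rewrite DY in H1 by exact Hi. unfold y in H1.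
      rewrite Hmub in H1. pose proof (xx_pos n adj a i).
      assert (H2 : xx n adj a i * (E i / bT) = 0) by lra.
      apply Rmult_integral in H2. destruct H2 as [H2|H2]; [lra|].
      unfold Rdiv in H2. apply Rmult_integral in H2. destruct H2 as [H2|H2]; auto.
      pose proof (Rinv_neq_0_compat bT ltac:(lra)). lra. }
    assert (Hterm : forall i j, (i < n)%nat -> (j < n)%nat -> W i j * (M j - Mn) = 0).
    { intros i j Hi Hj. apply (sumR_zero_each n (fun j => W i j * (M j - Mn))).
      - intros k Hk. pose proof (HW0 i k Hi Hk). pose proof (Hr k Hk). nra.
      - apply (HE i Hi).
      - exact Hj. }
    destruct (min_exists (fun p => M p = Mn) (n-1) eq_refl) as [p [Hp [HPp Hmin]]].
    destruct (Nat.eq_dec p 0) as [->|Hp0].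
    + left. intros k Hk. pose proof (Hr k Hk). pose proof (Hord 0%nat k ltac:(lia) Hk). fold M in H0. lra.
    + right. exists (S p). split; [lia|]. split; [lia|].
      replace (S p - 1)%nat with p by lia. split.
      * intros k l Hk Hl Hkl. pose proof (Hterm k l Hk ltac:(lia)) as H1.
        unfold W in H1. destruct (Nat.eqb_spec k l); [lia|].
        apply Rmult_integral in H1. destruct H1 as [H1|H1]; [fold B; lra|].
        exfalso. apply (Hmin l Hl). lra.
      * intros k Hk1 Hk2. pose proof (Hr k Hk2). pose proof (Hord p k Hk1 Hk2). fold M in H0. lra.
  - intros Hc.
    assert (HE : forall i, (i < n)%nat -> E i = 0).
    { intros i Hi. unfold E. rewrite (sumR_ext n _ (fun _ => 0)); [apply sumR_zero|].
      intros j Hj. destruct Hc as [Hc|[t [Ht1 [Ht2 [Hi1 Hi2]]]]].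
      - rewrite (Hc j Hj). ring.
      - destruct (Nat.lt_ge_cases j (t - 1)) as [Hjt|Hjt].
        + unfold W. destruct (Nat.eqb_spec i j); [ring|].
          rewrite (Hi1 i j Hi Hjt n0). fold B. ring.
        + rewrite (Hi2 j Hjt Hj). ring. }
    assert (Hdy : forall i, (i < n)%nat -> sumR n (fun j => Dmat n adj i j * y j) = bound * y i).
    { intros i Hi. rewrite DY, HE by exact Hi. unfold y. unfold Rdiv. ring. }
    apply Rle_antisym; [|exact Hpart1].
    destruct Hrho as [_ Hleast]. apply Hleast.
    intros r [lam [[v [Hv Hev]] ->]].
    apply (ub_lemma n (Dmat n adj) y bound lam v); auto.
    + lia.
    + intros; apply Dmat_nonneg.
Qed.

(* Vertices are 0..n-1 (paper's vertex v_k is index k-1). *)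
Theorem theorem6 (n : nat) (adj : nat -> nat -> bool) (a rho : R)
  (Hn : (2 <= n)%nat)
  (Hg : simple_graph n adj)
  (Hc : connected n adj)
  (Hord : forall i j, (i <= j)%nat -> (j < n)%nat ->
            gen_avg_trans n adj a j <= gen_avg_trans n adj a i)
  (Hrho : is_spectral_radius n (Dmat n adj) rho) :
  let M := gen_avg_trans n adj a in
  let T := Tmin n adj a in
  let Mn := M (n - 1)%nat in
  let bound := (Mn - T + sqrt ((Mn + T) ^ 2
                  + 4 * T * sumR (n - 1) (fun k => M k - Mn))) / 2 in
  rho >= bound /\
  (rho = bound <->
     ((forall k, (k < n)%nat -> M k = Mn) \/
      (exists t, (2 <= t)%nat /\ (t <= n)%nat /\
         (forall k l, (k < n)%nat -> (l < t - 1)%nat -> k <> l ->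
            qratio n adj a k l = T) /\
         (forall k, (t - 1 <= k)%nat -> (k < n)%nat -> M k = Mn)))).
Proof.
  intros. apply main_result; assumption.
Qed.
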